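(* Let $X$ be a finite set, $f:X\to X$ a function, and consider the iterative generator $\mathcal G$ with state sequences $\mathcal G(s)=(x_0=s,x_1,x_2,\dots)$, $x_i=f(x_{i-1})$ for $i\ge 1$, $s\in X$. (1) For every seed $s\in X$, the state sequence $\vec x=\mathcal G(s)$ satisfies $\mathcal D_{\vec x}(k)=\min\{k,p\}$ for all $k\ge 1$, where $p$ is the length of the cycle that $\vec x$ eventually enters. (2) $\mathcal D_{\mathcal G}(k)=\min\{k,p\}$ for all $k\ge1$, where $p$ is the length of the shortest cycle of $f$ (i.e. the least $p\ge1$ such that $f^p(x)=x$ for some $x\in X$).
   Context: The diversity of a sequence $\vec x=(x_0,x_1,\dots)$ is the function $\mathcal D_{\vec x}(k)$, $k=1,2,\dots$, defined as the minimum, over all $i\ge 0$, of the number of distinct values among $x_i,x_{i+1},\dots,x_{i+k-1}$. The diversity of the generator is $\mathcal D_{\mathcal G}(k)=\min\{\mathcal D_{\mathcal G(s)}(k): s\in X\}$. Since $X$ is finite, every state sequence is eventually periodic, i.e. it eventually enters a cycle of $f$. *)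

(* Defs.v *)
From mathcomp Require Import all_boot.
From mathcomp Require Import boolp.
Set Implicit Arguments. Unset Strict Implicit. Unset Printing Implicit Defensive.

(* Minimum of a set of naturals given by a Prop predicate (0 if empty). *)
Definition natmin (P : nat -> Prop) : nat :=
  match pselect (exists n, P n) with
  | left h =>
      @ex_minn (fun n => `[< P n >])
        (let: ex_intro n Pn := h in ex_intro _ n (asboolT Pn))
  | right _ => 0
  end.

Definition window_distinct (T : finType) (x : nat -> T) (i k : nat) : nat :=
  #|[set x (i + j) | j : 'I_k]|.

Definition seq_diversity (T : finType) (x : nat -> T) (k : nat) : nat :=
  natmin (fun d => exists i, window_distinct x i k = d).

Definition state_seq (T : finType) (f : T -> T) (s : T) : nat -> T :=
  fun i => iter i f s.

Definition gen_diversity (T : finType) (f : T -> T) (k : nat) : nat :=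
  natmin (fun d => exists s : T, seq_diversity (state_seq f s) k = d).

Definition entered_cycle_length (T : finType) (f : T -> T) (s : T) : nat :=
  natmin (fun p => 0 < p /\ exists i, iter p f (iter i f s) = iter i f s).

Definition shortest_cycle_length (T : finType) (f : T -> T) : nat :=
  natmin (fun p => 0 < p /\ exists x : T, iter p f x = x).

(* Main.v *)
Require Import Defs.
From mathcomp Require Import all_boot.
From mathcomp Require Import boolp zify.

Lemma natmin_spec (P : nat -> Prop) : (exists n, P n) ->
  P (natmin P) /\ forall e, P e -> natmin P <= e.
Proof.
move=> ex; rewrite /natmin; case: pselect => [h|//].
case: ex_minnP => m /asboolP Pm minm; split => // e Pe.
by apply: minm; apply/asboolP.
Qed.

Lemma natmin_eq (P : nat -> Prop) d : P d -> (forall e, P e -> d <= e) -> natmin P = d.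
Proof.
move=> Pd mind; have [Pm minm] := @natmin_spec P (ex_intro _ d Pd).
by apply/eqP; rewrite eqn_leq minm // mind.
Qed.

Lemma iter_per (T : Type) (f : T -> T) p y : iter p f y = y ->
  forall j, iter j f y = iter (j %% p) f y.
Proof.
move=> hp j; rewrite {1}(divn_eq j p) addnC iterD.
congr (iter _ f _); elim: (j %/ p) => [|n IH] //.
by rewrite mulSn iterD IH hp.
Qed.

Lemma cycle_exists (T : finType) (f : T -> T) (s : T) :
  exists p, 0 < p /\ exists i, iter p f (iter i f s) = iter i f s.
Proof.
have : ~~ injectiveb (fun i : 'I_#|T|.+1 => iter i f s).
  apply/negP => /injectiveP inj; have := @leq_card _ _ _ inj.
  by rewrite card_ord ltnn.
case/injectivePn => i [j] ne eq.
wlog lt : i j ne eq / i < j.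
  move=> H; case: (ltngtP i j) => c; first exact: (H i j).
  - by apply: (H j i) => //; rewrite eq_sym.
  - by move: ne; rewrite (val_inj c) eqxx.
exists (j - i); split; first by rewrite subn_gt0.
exists i; rewrite -iterD (subnK (ltnW lt)); exact: esym eq.
Qed.

Lemma part1 (T : finType) (f : T -> T) (s : T) (k : nat) : 0 < k ->
  seq_diversity (state_seq f s) k = minn k (entered_cycle_length f s).
Proof.
move=> k0.
have [[p0 [i0 hi0]] minp] := @natmin_spec _ (@cycle_exists _ f s).
rewrite -/(entered_cycle_length f s) in p0 hi0 minp.
set p := entered_cycle_length f s in p0 hi0 minp *.
have dist : forall i a b, a < b -> b - a < p -> iter (i + a) f s <> iter (i + b) f s.
  move=> i a b ab bp e; suff : p <= b - a by rewrite leqNgt bp.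
  apply: minp; split; first by rewrite subn_gt0.
  exists (i + a); rewrite -iterD.
  have -> : b - a + (i + a) = i + b by lia.
  exact: esym e.
have lower : forall i, minn k p <= window_distinct (state_seq f s) i k.
  move=> i; set m := minn k p.
  have mk : m <= k by rewrite geq_minl.
  have inj : injective (fun j : 'I_m => state_seq f s (i + j)).
    move=> a b; rewrite /state_seq => e; apply/val_inj/eqP.
    have mp : m <= p by rewrite geq_minr.
    case: (ltngtP a b) => // c; exfalso.
    - apply: (dist i a b c _ e); have := ltn_ord b; lia.
    - apply: (dist i b a c _ (esym e)); have := ltn_ord a; lia.
  rewrite /window_distinct -[X in X <= _](card_ord m) -(card_imset predT inj).
  apply: subset_leq_card; apply/subsetP => y /imsetP [j _ ->].
  by apply/imsetP; exists (widen_ord mk j).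
apply: natmin_eq.
  exists i0; apply/eqP; rewrite eqn_leq leq_min; apply/andP; split.
    apply/andP; split; first by rewrite -[X in _ <= X]card_ord leq_imset_card.
    rewrite -[X in _ <= X](card_ord p).
    apply: leq_trans (leq_imset_card (fun j : 'I_p => state_seq f s (i0 + j)) predT).
    apply: subset_leq_card; apply/subsetP => y /imsetP [j _ ->].
    apply/imsetP; exists (Ordinal (ltn_pmod j p0)) => //=.
    by rewrite /state_seq addnC iterD (@iter_per _ f p _ hi0) -iterD addnC.
  exact: lower.
by move=> _ [i <-]; apply: lower.
Qed.

Lemma natmin_none (P : nat -> Prop) : ~ (exists n, P n) -> natmin P = 0.
Proof. by move=> h; rewrite /natmin; case: pselect. Qed.

Lemma ecl_spec (T : finType) (f : T -> T) (s : T) :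
  (0 < entered_cycle_length f s /\ exists i, iter (entered_cycle_length f s) f (iter i f s) = iter i f s)
  /\ forall e, (0 < e /\ exists i, iter e f (iter i f s) = iter i f s) -> entered_cycle_length f s <= e.
Proof. exact: (@natmin_spec _ (@cycle_exists _ f s)). Qed.

Lemma q_le_ecl (T : finType) (f : T -> T) (s : T) :
  shortest_cycle_length f <= entered_cycle_length f s /\
  (0 < shortest_cycle_length f /\ exists x, iter (shortest_cycle_length f) f x = x) /\
  forall e, (0 < e /\ exists x : T, iter e f x = x) -> shortest_cycle_length f <= e.
Proof.
have [[p0 [i hi]] minp] := @ecl_spec _ f s.
have ex : exists n, 0 < n /\ exists x : T, iter n f x = x.
  by exists (entered_cycle_length f s); split => //; exists (iter i f s).
have [Pq minq] := @natmin_spec _ ex.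
split; last by split.
by apply: minq; split => //; exists (iter i f s).
Qed.

Lemma part2 (T : finType) (f : T -> T) (k : nat) : 0 < k ->
  gen_diversity f k = minn k (shortest_cycle_length f).
Proof.
move=> k0.
case: (pselect (exists x : T, True)) => [[x0 _]|nT]; last first.
  rewrite /gen_diversity natmin_none; last by case=> d [s _]; apply: nT; exists s.
  rewrite /shortest_cycle_length natmin_none ?minn0 //.
  by case=> d [_ [s _]]; apply: nT; exists s.
have [_ [[q0 [y hy]] minq]] := @q_le_ecl _ f x0.
apply: natmin_eq.
  exists y; rewrite part1 //; congr minn.
  have [_ mine] := @ecl_spec _ f y.
  apply/eqP; rewrite eqn_leq; apply/andP; split.
    by apply: mine; split => //; exists 0.
  have [[e0 [i hi]] _] := @ecl_spec _ f y.
  by apply: minq; split => //; exists (iter i f y).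
move=> _ [s <-]; rewrite part1 //.
have [h _] := @q_le_ecl _ f s.
by rewrite leq_min geq_minl /=; apply: leq_trans h; rewrite geq_minr.
Qed.

Theorem mainTheorem1 (T : finType) (f : T -> T) :
  (forall (s : T) (k : nat), 0 < k ->
     seq_diversity (state_seq f s) k = minn k (entered_cycle_length f s)) /\
  (forall k : nat, 0 < k ->
     gen_diversity f k = minn k (shortest_cycle_length f)).
Proof.
split; [exact: (@part1 _ f) | exact: (@part2 _ f)].
Qed.
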